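(* Let $G$ and $H$ be two nontrivial connected graphs with $hn_{cc}(H)=2$. Then $hn_{cc}(G)\leq hn_{cc}(G\Box H)\leq hn_{cc}(G)+1$. Moreover, $hn_{cc}(G\Box H)=hn_{cc}(G)$ if and only if there is a minimum cycle hull set $S$ of $G$ such that $S$ can be partitioned into two sets $S_1$ and $S_2$ with $\langle S_1\rangle_C\cap\langle S_2\rangle_C\neq\emptyset$.
   Context: All graphs are finite, simple and undirected. For a graph $G$ and $S\subseteq V(G)$, the cycle interval $\langle S\rangle$ consists of the vertices of $S$ together with every vertex $w\in V(G)\setminus S$ such that $G[S\cup\{w\}]$ contains a cycle through $w$; $S$ is cycle convex if $\langle S\rangle=S$; the cycle convex hull $\langle S\rangle_C$ is the smallest cycle convex set containing $S$; a (cycle) hull set is a set $S$ with $\langle S\rangle_C=V(G)$, and $hn_{cc}(G)$ is the minimum cardinality of a hull set; a minimum hull set is a hull set of cardinality $hn_{cc}(G)$. The Cartesian product $G\Box H$ has vertex set $V(G)\times V(H)$, with $(g_1,h_1)\sim(g_2,h_2)$ iff ($g_1\sim g_2$ and $h_1=h_2$) or ($g_1=g_2$ and $h_1\sim h_2$). A graph is nontrivial if it has at least two vertices. *)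

(* Defs.v *)
From mathcomp Require Import all_boot.
Set Implicit Arguments. Unset Strict Implicit. Unset Printing Implicit Defensive.

Section CycleConvexity.
Variables (T : finType) (e : rel T).

Definition simple_graph := symmetric e /\ irreflexive e.

Definition is_cycle_through (A : {set T}) (w : T) (c : seq T) : bool :=
  [&& uniq c, 2 < size c, w \in c, all (fun x => x \in A) c & cycle e c].

(* boolean version: since a cycle is duplicate-free, its length is <= #|T|,
   so it suffices to search among tuples of length at most #|T| *)
Definition has_cycle_through (A : {set T}) (w : T) : bool :=
  [exists n : 'I_#|T|.+1, exists c : n.-tuple T, is_cycle_through A w c].

Definition cycle_interval (S : {set T}) : {set T} :=
  S :|: [set w | (w \notin S) && has_cycle_through (w |: S) w ].

Definition cycle_convex (S : {set T}) : bool := cycle_interval S == S.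

Definition cc_hull (S : {set T}) : {set T} :=
  \bigcap_(C : {set T} | (S \subset C) && cycle_convex C) C.

Definition cc_hull_set (S : {set T}) : bool := cc_hull S == [set: T].

(* hull number: minimum cardinality of a hull set (setT is always one) *)
Definition hn_cc : nat :=
  \big[minn/#|T|]_(S : {set T} | cc_hull_set S) #|S|.

Definition min_hull_set (S : {set T}) : bool := cc_hull_set S && (#|S| == hn_cc).

Definition connected_graph : Prop := forall x y : T, connect e x y.

End CycleConvexity.

Definition cart_prod (T1 T2 : finType) (e1 : rel T1) (e2 : rel T2) : rel (T1 * T2) :=
  fun u v => (e1 u.1 v.1 && (u.2 == v.2)) || ((u.1 == v.1) && e2 u.2 v.2).

(* Main.v *)
Require Import Defs.
From mathcomp Require Import all_boot.
Set Implicit Arguments. Unset Strict Implicit. Unset Printing Implicit Defensive.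
Module Helpers.

Lemma connect_map (T U : finType) (r : rel T) (r' : rel U) (f : T -> U) :
  (forall x y, r x y -> connect r' (f x) (f y)) ->
  forall x y, connect r x y -> connect r' (f x) (f y).
Proof.
move=> H x _ /connectP[p e_p ->]; elim: p x e_p => //= y p IHp x /andP[exy].
by move/IHp; apply: connect_trans; apply: H.
Qed.

Section Gen.
Variables (T : finType) (e : rel T).
Hypothesis esym : symmetric e.

Definition rA (A : {set T}) : rel T := fun x y => [&& x \in A, y \in A & e x y].

Lemma path_rA_all (A : {set T}) a p : path (rA A) a p -> all (fun x => x \in A) p.
Proof.
elim: p a => //= y p IH a /andP[/and3P[_ yA _] /IH ->]; by rewrite yA.
Qed.

Lemma mk_cyc (A : {set T}) w a b : w \notin A -> a \in A -> b \in A -> a != b ->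
  e w a -> e w b -> connect (rA A) a b -> w \in cycle_interval e A.
Proof.
move=> wA aA bA ab ewa ewb /connectP[p0 pp0 lp0].
case: (shortenP pp0) lp0 => p pp up _ lp.
rewrite /cycle_interval inE (negbTE wA) /= inE wA /=.
have allp := path_rA_all pp.
set c := w :: a :: p.
have pne : p != [::] by move: ab; rewrite lp; case: p {pp up allp lp c}=> //=; rewrite eqxx.
have uc : uniq c.
  rewrite /c cons_uniq up andbT; apply/negP; rewrite inE => /orP[/eqP wa|wp].
    by move: wA; rewrite wa aA.
  by move: wA; rewrite (allP allp w wp).
have sz : size c < #|T|.+1 by rewrite ltnS -(card_uniqP uc) max_card.
apply/existsP; exists (Ordinal sz); apply/existsP; exists (in_tuple c).
apply/and5P; split => //.
- by rewrite /c /= !ltnS lt0n size_eq0.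
- by rewrite inE eqxx.
- apply/andP; split; first by rewrite !inE eqxx.
  apply/andP; split; first by rewrite !inE aA orbT.
  by apply/allP=> x xp; rewrite !inE (allP allp x xp) orbT.
- rewrite /c /= ewa /= rcons_path -lp esym ewb andbT.
  by apply: sub_path pp => x y /and3P[].
Qed.

Lemma dest_cyc (A : {set T}) w : w \in cycle_interval e A -> w \notin A ->
  exists a b, [/\ a \in A, b \in A & a != b] /\ [/\ e w a, e w b & connect (rA A) a b].
Proof.
rewrite /cycle_interval inE => /orP[->//|]; rewrite inE => /andP[_ hc] wA.
case/existsP: hc => n /existsP[t /and5P[ut szt wt allt ct]].
set c := val t in ut szt wt allt ct.
have := rot_index wt; set i := index w c; set q := drop _ _ ++ _ => ec.
have uq : uniq (w :: q) by rewrite -ec rot_uniq.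
have cq : cycle e (w :: q) by rewrite -ec rot_cycle.
have aq : all (fun x => x \in w |: A) (w :: q) by apply/allP => x; rewrite -ec mem_rot; apply: (allP allt).
have szq : 2 < size (w :: q) by rewrite -ec size_rot.
case: q uq cq aq szq {ec} => [|a p] //= /andP[wap up] /andP[ewa].
rewrite rcons_path => /andP[pp elw] /andP[_ /andP[aA0 allp]] szp.
have notw x : x \in a :: p -> x \in w |: A -> x \in A.
  by move=> xap; rewrite !inE => /orP[/eqP xw|//]; move: wap; rewrite -xw xap.
have aA : a \in A by apply: notw; rewrite ?mem_head.
have pA : all (fun x => x \in A) p.
  by apply/allP=> x xp; apply: notw; [rewrite inE xp orbT| exact: (allP allp)].
exists a, (last a p); split; split => //.
- by have := mem_last a p; rewrite inE => /orP[/eqP->|/(allP pA)].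
- case: p szp up {pp elw allp pA wap notw} => //= y p _ /andP[nap _].
  by apply: contraNneq nap => ->; exact: mem_last.
- by rewrite esym.
- apply/connectP; exists p => //.
  clear -pA pp aA; elim: p a aA pA pp => //= y p IH a aA /andP[yA pA] /andP[eay pp].
  by rewrite /rA aA yA eay /= IH.
Qed.

Lemma convex_in (C : {set T}) w a b : cycle_convex e C -> w \notin C -> a \in C -> b \in C ->
  a != b -> e w a -> e w b -> connect (rA C) a b -> False.
Proof.
move=> /eqP cC wC aC bC ab ewa ewb cab.
by have := mk_cyc wC aC bC ab ewa ewb cab; rewrite cC (negbTE wC).
Qed.

Lemma convexP (C : {set T}) :
  (forall w a b, w \notin C -> a \in C -> b \in C -> a != b -> e w a -> e w b ->
     connect (rA C) a b -> False) -> cycle_convex e C.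
Proof.
move=> H; apply/eqP/setP => w.
case wC: (w \in C); first by rewrite /cycle_interval inE wC.
apply/negbTE/negP => wI.
have [a [b [[aC bC ab] [ewa ewb cab]]]] := dest_cyc wI (negbT wC).
exact: (H w a b (negbT wC)).
Qed.

Lemma connect_rA_mono (A B : {set T}) a b : A \subset B -> connect (rA A) a b -> connect (rA B) a b.
Proof.
move=> /subsetP AB; apply: connect_sub => x y /and3P[xA yA exy].
by apply: connect1; rewrite /rA (AB x xA) (AB y yA).
Qed.

Lemma hull_min (S C : {set T}) : S \subset C -> cycle_convex e C -> cc_hull e S \subset C.
Proof. by move=> SC cC; apply: bigcap_inf; rewrite SC cC. Qed.

Lemma hull_sub (S : {set T}) : S \subset cc_hull e S.
Proof. by apply/subsetP => x xS; apply/bigcapP => C /andP[/subsetP SC _]; exact: SC. Qed.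

Lemma hull_mono (S S' : {set T}) : S \subset S' -> cc_hull e S \subset cc_hull e S'.
Proof.
move=> SS'; apply/subsetP => x /bigcapP H; apply/bigcapP => C /andP[S'C cC].
by apply: H; rewrite (subset_trans SS' S'C) cC.
Qed.

Lemma hull_convex (S : {set T}) : cycle_convex e (cc_hull e S).
Proof.
apply: convexP => w a b wH aH bH ab ewa ewb cab.
apply/negP: wH; rewrite negbK; apply/bigcapP => C /andP[SC cC].
case: (boolP (w \in C)) => // wC; exfalso.
have HC := hull_min SC cC.
apply: (convex_in cC wC _ _ ab ewa ewb (connect_rA_mono HC cab)).
- exact: (subsetP HC).
- exact: (subsetP HC).
Qed.

Lemma hull_in (S C : {set T}) x : S \subset C -> cycle_convex e C -> x \in cc_hull e S -> x \in C.
Proof. by move=> SC cC; apply: (subsetP (hull_min SC cC)). Qed.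

Lemma hullT_set (S : {set T}) : (forall C : {set T}, S \subset C -> cycle_convex e C -> C = setT) -> cc_hull_set e S.
Proof.
move=> H; rewrite /cc_hull_set eqEsubset subsetT /=; apply/subsetP => x _.
by apply/bigcapP => C /andP[SC cC]; rewrite (H C SC cC) inE.
Qed.

Lemma hn_le (S : {set T}) : cc_hull_set e S -> hn_cc e <= #|S|.
Proof.
move=> hS; rewrite /hn_cc -big_filter.
have : S \in [seq i <- index_enum _ | cc_hull_set e i] by rewrite mem_filter hS mem_index_enum.
elim: [seq i <- _ | _] => //= x r IH; rewrite inE big_cons => /orP[/eqP<-|/IH h].
- exact: geq_minl.
- exact: leq_trans (geq_minr _ _) h.
Qed.

Lemma hn_ex : exists S, cc_hull_set e S /\ #|S| = hn_cc e.
Proof.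
rewrite /hn_cc; apply: (big_ind (fun v => exists S, cc_hull_set e S /\ #|S| = v)).
- exists setT; split; last exact: cardsT.
  by rewrite /cc_hull_set eqEsubset subsetT hull_sub.
- move=> x y [S [hS <-]] [S' [hS' <-]]; rewrite /minn; case: ifP => _.
  + by exists S.
  + by exists S'.
- by move=> S hS; exists S.
Qed.

Lemma conn_comp (A : {set T}) x v : connect (rA A) x v ->
  connect (rA (A :&: [set u | connect (rA A) x u])) x v.
Proof.
move=> cxv; have cxx : connect (rA A) x x := connect0 _ x.
case/connectP: cxv => p pp ->.
suff H : forall u, connect (rA A) x u -> path (rA A) u p ->
  connect (rA (A :&: [set u | connect (rA A) x u])) u (last u p) by exact: H.
elim: p {pp} => [|y p IH] u cxu /=; first by move=> _; exact: connect0.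
case/andP => euy pp.
have cxy : connect (rA A) x y := connect_trans cxu (connect1 euy).
apply: connect_trans (IH y cxy pp); apply: connect1.
case/and3P: euy => uA yA e_uy.
by rewrite /rA !inE uA yA cxu cxy e_uy.
Qed.

Lemma comp_hull (K : {set T}) x v : connect (rA (cc_hull e K)) x v -> v \in cc_hull e K ->
  v \in cc_hull e (K :&: [set u | connect (rA (cc_hull e K)) x u]).
Proof.
set H := cc_hull e K; set C2 := [set u | connect (rA H) x u]; set HQ := cc_hull e (K :&: C2).
set M := HQ :|: (H :\: C2).
have MH : M \subset H.
  rewrite subUset subsetDl andbT; apply: hull_mono; exact: subsetIl.
have MC : forall u, u \in M -> u \in C2 -> u \in HQ.
  by move=> u; rewrite !inE => /orP[//|/andP[/negP + _]] => /[swap] ->.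
have KM : K \subset M.
  apply/subsetP => k kK; rewrite in_setU in_setD; case kC: (k \in C2).
  - by rewrite (subsetP (hull_sub (K :&: C2))) // inE kK kC.
  - by rewrite /= (subsetP (hull_sub K)) // orbT.
have cM : cycle_convex e M.
  apply: convexP => w a b wM aM bM ab ewa ewb cab.
  have aH := subsetP MH a aM; have bH := subsetP MH b bM.
  case: (boolP (w \in H)) => wH; last first.
    exact: (convex_in (hull_convex K) wH aH bH ab ewa ewb (connect_rA_mono MH cab)).
  have wC : w \in C2.
    by case: (boolP (w \in C2)) => // wC; move: wM; rewrite in_setU in_setD wC wH orbT.
  have toC u y : u \in C2 -> y \in H -> u \in H -> e u y -> y \in C2.
    move=> uC yH uH euy; move: uC; rewrite !inE => cu.
    by apply: connect_trans cu (connect1 _); rewrite /rA uH yH euy.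
  have aC := toC w a wC aH wH ewa; have bC := toC w b wC bH wH ewb.
  have wHQ : w \notin HQ by apply: contra wM; rewrite inE => ->.
  apply: (convex_in (hull_convex (K :&: C2)) wHQ (MC a aM aC) (MC b bM bC) ab ewa ewb).
  case/connectP: cab => p pp ->.
  elim: p a aM aC pp {aH ab ewa} => //= y p IH u uM uC /andP[/and3P[_ yM euy] pp].
  have yC := toC u y uC (subsetP MH y yM) (subsetP MH u uM) euy.
  apply: connect_trans (IH y yM yC pp); apply: connect1.
  by rewrite /rA (MC u uM uC) (MC y yM yC) euy.
move=> cxv vH.
have vM : v \in M := subsetP (hull_min KM cM) v vH.
by apply: MC => //; rewrite inE.
Qed.
End Gen.

Section Prod.
Variables (T1 T2 : finType) (e1 : rel T1) (e2 : rel T2).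
Hypotheses (s1 : symmetric e1) (s2 : symmetric e2) (i1 : irreflexive e1) (i2 : irreflexive e2).
Notation P := (cart_prod e1 e2).

Lemma cart_sym : symmetric P.
Proof.
move=> [x1 x2] [y1 y2]; rewrite /cart_prod /= s1 s2 (eq_sym x1) (eq_sym x2) //.
Qed.

Lemma cartE (u v : T1 * T2) : P u v = (e1 u.1 v.1 && (u.2 == v.2)) || ((u.1 == v.1) && e2 u.2 v.2).
Proof. by []. Qed.

Lemma prodX_convex (C : {set T1}) : cycle_convex e1 C -> cycle_convex P (setX C [set: T2]).
Proof.
move=> cC; apply: (convexP cart_sym) => [[g h] [a1 a2] [b1 b2]].
rewrite !in_setX !inE !andbT /= => gC a1C b1C ab.
rewrite !cartE /= => /orP[/andP[ega /eqP ha]|/andP[/eqP ga _]]; last by move: gC; rewrite ga a1C.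
move=> /orP[/andP[egb /eqP hb]|/andP[/eqP gb _]]; last by move: gC; rewrite gb b1C.
move=> cab; apply: (convex_in s1 cC gC a1C b1C _ ega egb).
  by apply: contraNneq ab => eab; rewrite -ha -hb eab.
have := connect_map (f := fst) (r' := rA e1 C) _ cab; apply.
move=> [u1 u2] [v1 v2] /and3P[]; rewrite !in_setX !inE !andbT /= => u1C v1C.
rewrite cartE /= => /orP[/andP[euv _]|/andP[/eqP <- _]]; last exact: connect0.
by apply: connect1; rewrite /rA u1C v1C euv.
Qed.

Lemma slice_convex (D : {set T1 * T2}) h : cycle_convex P D -> cycle_convex e1 [set g | (g, h) \in D].
Proof.
move=> cD; apply: (convexP s1) => w a b; rewrite !inE => wD aD bD ab ewa ewb cab.
apply: (convex_in cart_sym cD wD aD bD).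
- by apply: contra_neq ab => -[].
- by rewrite cartE /= ewa eqxx.
- by rewrite cartE /= ewb eqxx.
have := connect_map (f := fun g => (g, h)) (r' := rA P D) _ cab; apply.
move=> u v /and3P[]; rewrite !inE => uD vD euv.
by apply: connect1; rewrite /rA uD vD cartE /= euv eqxx.
Qed.

Lemma vslice_convex (D : {set T1 * T2}) g : cycle_convex P D -> cycle_convex e2 [set h | (g, h) \in D].
Proof.
move=> cD; apply: (convexP s2) => w a b; rewrite !inE => wD aD bD ab ewa ewb cab.
apply: (convex_in cart_sym cD wD aD bD).
- by apply: contra_neq ab => -[].
- by rewrite cartE /= ewa eqxx orbT.
- by rewrite cartE /= ewb eqxx orbT.
have := connect_map (f := fun h => (g, h)) (r' := rA P D) _ cab; apply.
move=> u v /and3P[]; rewrite !inE => uD vD euv.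
by apply: connect1; rewrite /rA uD vD cartE /= euv eqxx orbT.
Qed.

Lemma square (D : {set T1 * T2}) g g' h h' : cycle_convex P D ->
  (g, h) \in D -> (g, h') \in D -> (g', h) \in D -> e1 g g' -> e2 h h' -> (g', h') \in D.
Proof.
move=> cD d1 d2 d3 egg ehh; apply/negPn/negP => wD.
apply: (convex_in cart_sym cD wD d3 d2).
- by apply/eqP => -[eg _]; move: egg; rewrite eg i1.
- by rewrite cartE /= eqxx s2 ehh orbT.
- by rewrite cartE /= s1 egg eqxx.
apply: (connect_trans (y := (g, h))); apply: connect1.
- by rewrite /rA d3 d1 cartE /= s1 egg eqxx.
- by rewrite /rA d1 d2 cartE /= ehh eqxx orbT.
Qed.

Hypothesis c2 : connected_graph e2.

Lemma fiber_step (D : {set T1 * T2}) g g' h0 : cycle_convex P D ->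
  (forall h, (g, h) \in D) -> e1 g g' -> (g', h0) \in D -> forall h, (g', h) \in D.
Proof.
move=> cD full egg d0 h; case/connectP: (c2 h0 h) => p pp ->.
elim: p h0 d0 pp => //= y p IH h0 d0 /andP[ehy pp].
apply: (IH y _ pp); exact: (square cD (full h0) (full y) d0 egg ehy).
Qed.

Lemma fiber (D : {set T1 * T2}) x g h0 : cycle_convex P D ->
  (forall h, (x, h) \in D) -> connect (rA e1 [set g | (g, h0) \in D]) x g ->
  forall h, (g, h) \in D.
Proof.
move=> cD full /connectP[p pp ->].
elim: p x full pp => //= y p IH x full /andP[/and3P[_ yD exy] pp].
apply: (IH y _ pp); have yD0 : (y, h0) \in D by move: yD; rewrite inE.
exact: (fiber_step cD full exy yD0).
Qed.
End Prod.

Section Main.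
Variables (T1 T2 : finType) (e1 : rel T1) (e2 : rel T2).
Hypotheses (s1 : symmetric e1) (s2 : symmetric e2) (i1 : irreflexive e1) (i2 : irreflexive e2).
Hypotheses (c1 : connected_graph e1) (c2 : connected_graph e2).
Notation P := (cart_prod e1 e2).

Lemma hullset_all {T : finType} {e : rel T} {S C : {set T}} :
  cc_hull_set e S -> S \subset C -> cycle_convex e C -> forall x, x \in C.
Proof.
move=> /eqP hS SC cC x; apply: (hull_in SC cC); by rewrite hS inE.
Qed.

Lemma conn_all (B : {set T1}) x g : (forall g, g \in B) -> connect (rA e1 B) x g.
Proof.
move=> HB; apply: (connect_sub (e := e1)) (c1 x g) => u v euv.
by apply: connect1; rewrite /rA !HB euv.
Qed.

Lemma hullset_proj (T : {set T1 * T2}) (h0 : T2) : cc_hull_set P T -> cc_hull_set e1 (fst @: T).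
Proof.
move=> hT; set C := cc_hull e1 (fst @: T).
have cD := prodX_convex s1 s2 (hull_convex s1 (fst @: T)).
have TD : T \subset setX C [set: T2].
  apply/subsetP => -[u1 u2] uT; rewrite in_setX inE andbT.
  by apply: (subsetP (hull_sub e1 (fst @: T))); apply: (imset_f fst uT).
rewrite /cc_hull_set eqEsubset subsetT /=; apply/subsetP => g _.
by have := hullset_all hT TD cD (g, h0); rewrite in_setX => /andP[].
Qed.

Lemma lower (h0 : T2) : hn_cc e1 <= hn_cc P.
Proof.
have [T [hT <-]] := hn_ex P.
apply: leq_trans (hn_le (hullset_proj h0 hT)) _; exact: leq_imset_card.
Qed.

Lemma two_hull : hn_cc e2 = 2 -> exists h1 h2, cc_hull_set e2 [set h1; h2].
Proof.
move=> h2e; have [Hs [hH cH]] := hn_ex e2.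
have /cards2P[h1 [h2 [_ eH]]] : #|Hs| == 2 by rewrite cH h2e.
by exists h1, h2; rewrite -eH.
Qed.

Lemma full_x (D : {set T1 * T2}) x h1 h2 : cycle_convex P D -> cc_hull_set e2 [set h1; h2] ->
  (x, h1) \in D -> (x, h2) \in D -> forall h, (x, h) \in D.
Proof.
move=> cD hH d1 d2 h.
have := hullset_all hH _ (vslice_convex s1 s2 x cD) h; rewrite inE; apply.
by apply/subsetP => k; rewrite !inE => /orP[]/eqP->.
Qed.

Lemma upper (g0 : T1) : hn_cc e2 = 2 -> hn_cc P <= (hn_cc e1).+1.
Proof.
move=> /two_hull[h1 [h2 hH]].
have [S [hS <-]] := hn_ex e1.
set T := (g0, h2) |: [set (g, h1) | g in S].
suff hT : cc_hull_set P T.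
  apply: leq_trans (hn_le hT) _; rewrite cardsU1 -add1n.
  exact: leq_add (leq_b1 _) (leq_imset_card _ _).
apply: hullT_set => D TD cD.
have B1 : forall g, (g, h1) \in D.
  move=> g; have := hullset_all hS _ (slice_convex s1 s2 h1 cD) g; rewrite inE; apply.
  apply/subsetP => s sS; rewrite inE; apply: (subsetP TD).
  by rewrite inE; apply/orP; right; apply: imset_f.
have fx := full_x cD hH (B1 g0) (subsetP TD _ (setU11 _ _)).
apply/setP => [[g h]]; rewrite inE.
apply: (fiber s1 s2 i1 c2 cD fx); apply: conn_all => g'; by rewrite inE.
Qed.

Lemma back : hn_cc e2 = 2 ->
  (exists S S1 S2 : {set T1},
         [/\ min_hull_set e1 S, S1 :|: S2 = S, S1 :&: S2 = set0 &
             cc_hull e1 S1 :&: cc_hull e1 S2 != set0]) ->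
  hn_cc P <= hn_cc e1.
Proof.
move=> /two_hull[h1 [h2 hH]] [S [S1 [S2 [/andP[hS /eqP cS] U I /set0Pn[x]]]]].
rewrite inE => /andP[xS1 xS2].
set H2 := cc_hull e1 S2.
set C2 := [set u | connect (rA e1 H2) x u].
set Q := S2 :&: C2.
have xQ : x \in cc_hull e1 Q := comp_hull s1 (connect0 _ x) xS2.
have connQ : forall q, q \in Q -> connect (rA e1 (cc_hull e1 Q)) x q.
  move=> q; rewrite inE => /andP[qS2 qC]; rewrite inE in qC.
  apply: connect_rA_mono (conn_comp qC).
  apply/subsetP => u; rewrite inE => /andP[uH uC]; rewrite inE in uC.
  exact: (@comp_hull _ e1 s1 S2 x u uC uH).
set f := fun g => (g, if g \in Q then h2 else h1).
set T := f @: S.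
have cT : #|T| = #|S| by apply: card_in_imset => u v _ _ /(congr1 fst).
suff hT : cc_hull_set P T by rewrite -cS -cT; exact: hn_le hT.
apply: hullT_set => D TD cD.
have inT s : s \in S -> (s, if s \in Q then h2 else h1) \in D.
  by move=> sS; apply: (subsetP TD); apply: (imset_f f sS).
have S1S : S1 \subset S by rewrite -U subsetUl.
have S2S : S2 \subset S by rewrite -U subsetUr.
have S1Q s : s \in S1 -> s \notin Q.
  move=> sS1; apply/negP; rewrite inE => /andP[sS2 _].
  have : s \in S1 :&: S2 by rewrite inE sS1 sS2.
  by rewrite I inE.
have d1 : (x, h1) \in D.
  have := hull_in _ (slice_convex s1 s2 h1 cD) xS1; rewrite inE; apply.
  apply/subsetP => s sS1; rewrite inE.
  by have := inT s (subsetP S1S s sS1); rewrite (negbTE (S1Q s sS1)).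
have QB2 : Q \subset [set g | (g, h2) \in D].
  apply/subsetP => q qQ; rewrite inE.
  have qS : q \in S by apply: (subsetP S2S); move: qQ; rewrite inE => /andP[].
  by have := inT q qS; rewrite qQ.
have d2 : (x, h2) \in D.
  by have := hull_in QB2 (slice_convex s1 s2 h2 cD) xQ; rewrite inE.
have fx := full_x cD hH d1 d2.
have fullQ q : q \in Q -> forall h, (q, h) \in D.
  move=> qQ; apply: (fiber s1 s2 i1 c2 cD fx).
  apply: connect_rA_mono (connQ q qQ).
  exact: hull_min QB2 (slice_convex s1 s2 h2 cD).
have SB1 : S \subset [set g | (g, h1) \in D].
  apply/subsetP => s sS; rewrite inE.
  case: (boolP (s \in Q)) => sQ; first exact: fullQ.
  by have := inT s sS; rewrite (negbTE sQ).
have B1 g : (g, h1) \in D.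
  by have := hullset_all hS SB1 (slice_convex s1 s2 h1 cD) g; rewrite inE.
apply/setP => [[g h]]; rewrite inE.
apply: (fiber s1 s2 i1 c2 cD fx); apply: conn_all => g'; by rewrite inE.
Qed.

Lemma forth (hA hB : T2) (g0 : T1) : hA != hB -> hn_cc P = hn_cc e1 ->
  (exists S S1 S2 : {set T1},
         [/\ min_hull_set e1 S, S1 :|: S2 = S, S1 :&: S2 = set0 &
             cc_hull e1 S1 :&: cc_hull e1 S2 != set0]).
Proof.
move=> hAB heq.
have [T [hT cT]] := hn_ex P.
set pi := fst @: T.
have hpi := hullset_proj hA hT.
have cpi : #|pi| = #|T|.
  by apply/eqP; rewrite eqn_leq leq_imset_card /= cT heq; exact: hn_le hpi.
have inj : {in T &, injective fst} by apply/imset_injP; rewrite cpi.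
set Th := fun h => [set u in T | u.2 == h].
set Tn := fun h => [set u in T | u.2 != h].
set K := fun h => cc_hull e1 (fst @: Th h).
case: (boolP [exists h, K h :&: cc_hull e1 (fst @: Tn h) != set0]).
  case/existsP => h hne; exists pi, (fst @: Th h), (fst @: Tn h); split => //.
  - by rewrite /min_hull_set hpi cpi cT heq eqxx.
  - have eT : Th h :|: Tn h = T.
      by apply/setP => u; rewrite !inE -andb_orr orbN andbT.
    by rewrite -imsetU eT.
  - apply/setP => g; rewrite !inE; apply/negbTE/negP => /andP[/imsetP[u uTh ->] /imsetP[v vTn euv]].
    move: uTh vTn; rewrite !inE => /andP[uT /eqP uh] /andP[vT vh].
    by have uv := inj u v uT vT euv; move: vh; rewrite -uv uh eqxx.
move=> hno; exfalso.
have disj h h' g : g \in K h -> g \in K h' -> h = h'.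
  move=> gh gh'; apply/eqP/negPn/negP => hh'.
  move/existsPn: hno => /(_ h); rewrite negbK => /eqP H0.
  have : g \in K h :&: cc_hull e1 (fst @: Tn h).
    rewrite inE gh /=; apply: (subsetP (hull_mono e1 _)) gh'; apply: imsetS.
    by apply/subsetP => u; rewrite !inE => /andP[-> /eqP->]; rewrite eq_sym.
  by rewrite H0 inE.
set D := [set u | u.1 \in K u.2].
have cD : cycle_convex P D.
  apply: (convexP (cart_sym s1 s2)) => [[g h] [a1 a2] [b1 b2]].
  rewrite !inE /= => wD aD bD ab; rewrite !cartE /= => ewa ewb cab.
  have claim u v : connect (rA P D) u v -> v.2 = u.2 /\ connect (rA e1 (K u.2)) u.1 v.1.
    case/connectP => p pp ->; elim: p u pp => [|y p IH] u /=; first by split; [|exact: connect0].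
    case/andP => /and3P[uD yD euy] pp; rewrite !inE in uD yD.
    have [ey e1uy] : y.2 = u.2 /\ e1 u.1 y.1.
      move: euy; rewrite cartE => /orP[/andP[-> /eqP->]//|/andP[/eqP e12 ey2]].
      exfalso; rewrite e12 in uD; have e22 := disj _ _ _ uD yD.
      by move: ey2; rewrite e22 i2.
    have [IH1 IH2] := IH y pp; split; first by rewrite IH1 ey.
    rewrite ey in IH2; apply: connect_trans IH2; apply: connect1.
    by rewrite /rA uD -ey yD e1uy.
  have [/= eb cab'] := claim _ _ cab.
  subst b2.
  case/orP: ewa => [/andP[ega /eqP ha]|/andP[/eqP ga eha]].
  - subst a2; case/orP: ewb => [/andP[egb _]|/andP[_ ehb]]; last by rewrite i2 in ehb.
    apply: (convex_in s1 (hull_convex s1 _) wD aD bD _ ega egb cab').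
    by apply: contra_neq ab => ->.
  - subst a1; case/orP: ewb => [/andP[_ /eqP hb]|/andP[/eqP gb _]].
    + by subst a2; rewrite i2 in eha.
    + by subst b1; rewrite eqxx in ab.
have TD : T \subset D.
  apply/subsetP => u uT; rewrite inE; apply: (subsetP (hull_sub e1 _)).
  by apply/imsetP; exists u => //; rewrite inE uT eqxx.
have := hullset_all hT TD cD (g0, hA); have := hullset_all hT TD cD (g0, hB).
rewrite !inE /= => gB gA.
by move: hAB; rewrite (disj _ _ _ gA gB) eqxx.
Qed.
End Main.

End Helpers.
Import Helpers.
Unset Implicit Arguments.

Theorem mainTheorem8 (T1 T2 : finType) (e1 : rel T1) (e2 : rel T2) :
  simple_graph e1 -> simple_graph e2 ->
  1 < #|T1| -> 1 < #|T2| ->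
  connected_graph e1 -> connected_graph e2 ->
  hn_cc e2 = 2 ->
  [/\ hn_cc e1 <= hn_cc (cart_prod e1 e2),
      hn_cc (cart_prod e1 e2) <= (hn_cc e1).+1 &
      (hn_cc (cart_prod e1 e2) = hn_cc e1 <->
       exists S S1 S2 : {set T1},
         [/\ min_hull_set e1 S, S1 :|: S2 = S, S1 :&: S2 = set0 &
             cc_hull e1 S1 :&: cc_hull e1 S2 != set0])].
Proof.
move=> [s1 i1] [s2 i2] n1 n2 c1 c2 h2.
have [g0 _] : exists g : T1, g \in T1 by apply/card_gt0P; exact: ltnW.
have [hA [hB [_ _ hAB]]] : exists x y : T2, [/\ x \in T2, y \in T2 & x != y] by apply/card_gt1P.
have lo := lower s1 s2 hA.
split => //.
- exact: upper s1 s2 i1 c1 c2 g0 h2.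
- split.
  + exact: (@forth T1 T2 e1 e2 s1 s2 i2 hA hB g0 hAB).
  + move=> H; apply/eqP; rewrite eqn_leq lo andbT.
    exact: back s1 s2 i1 c1 c2 h2 H.
Qed.
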